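(* Let $k$ be a field of characteristic different from $2$. The morphism $\Psi_1$ induces a morphism $\mathbb{G}_m\to S_2$. For $n\geq 2$, the morphism $\Psi_n$ induces a pointed morphism \[ \Psi_n: Q_{2n-1}\longrightarrow\begin{cases} O_{2^{n-1}} & n\equiv 0 \pmod 4,\\ S_{2^{n-1}}\cong (GL_{2^{n-1}}/O_{2^{n-1}})_{\text{\'et}} & n\equiv 1\pmod 4,\\ Sp_{2^{n-1}} & n\equiv 2\pmod 4,\\ A_{2^{n-1}}\cong GL_{2^{n-1}}/Sp_{2^{n-1}} & n\equiv 3\pmod 4.\end{cases} \]
   Context: $Q_{2n-1}=\operatorname{Spec} k[x_1,\dots,x_n,y_1,\dots,y_n]/(\sum_i x_iy_i-1)$, pointed by $x=y=(1,0,\dots,0)$. For $m\ge1$, $\tau_{2m}$ is the block sum of $m$ copies of $\begin{pmatrix}0&1\\0&0\end{pmatrix}$, $\sigma_{2m}=\tau_{2m}+\tau_{2m}^t$, $\psi_{2m}=\tau_{2m}-\tau_{2m}^t$; $O_{2m}$ is the orthogonal group of $\sigma_{2m}$ and $Sp_{2m}$ the symplectic group of $\psi_{2m}$ (pointed by the identity), $S_{2m}$ is the scheme of invertible symmetric $2m\times 2m$ matrices (pointed by $\sigma_{2m}$, with $S_{2m}\cong (GL_{2m}/O_{2m})_{\text{\'et}}$ via $g\mapsto g^t\sigma_{2m}g$), $A_{2m}$ the scheme of invertible antisymmetric matrices (pointed by $\psi_{2m}$, $A_{2m}\cong GL_{2m}/Sp_{2m}$ via $g\mapsto g^t\psi_{2m}g$).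 Suslin matrices: for a commutative ring $R$ and $a=(a_1,\dots,a_n)$, $b=(b_1,\dots,b_n)\in R^n$, $\alpha_1(a,b)=a_1$ and for $n\ge2$, $\alpha_n(a,b)=\begin{pmatrix}a_1\mathrm{Id}_{2^{n-2}}&\alpha_{n-1}(a',b')\\-\alpha_{n-1}(b',a')^t&b_1\mathrm{Id}_{2^{n-2}}\end{pmatrix}$ where $a'=(a_2,\dots,a_n)$, $b'=(b_2,\dots,b_n)$. Let $I_1=1$, $I_n=\begin{pmatrix}0&I_{n-1}\\-I_{n-1}&0\end{pmatrix}$ for $n$ even, $I_n=\begin{pmatrix}I_{n-1}&0\\0&-I_{n-1}\end{pmatrix}$ for $n\ge 3$ odd. Define $E_n\in M_{2^{n-1}}(\mathbb{Z})$ by $E_1=E_2=\mathrm{Id}$ and for $n\ge3$ (block matrices with blocks of size $2^{n-2}$, $1$ an identity block): if $n\equiv0\ (4)$: $E_n=\begin{pmatrix}1&0\\0&I_{n-1}^t\end{pmatrix}\begin{pmatrix}1&0\\\tau_{2^{n-2}}&1\end{pmatrix}\begin{pmatrix}1&-\sigma_{2^{n-2}}\\0&1\end{pmatrix}\begin{pmatrix}1&0\\0&\psi_{2^{n-2}}\end{pmatrix}$; if $n\equiv1\ (4)$: $E_n=\begin{pmatrix}E_{n-1}&0\\0&E_{n-1}\end{pmatrix}\begin{pmatrix}1&0\\0&\psi_{2^{n-2}}\end{pmatrix}$; if $n\equiv2\ (4)$: $E_n=\begin{pmatrix}1&0\\0&I_{n-1}^t\end{pmatrix}\begin{pmatrix}1&0\\\tau_{2^{n-2}}&1\end{pmatrix}\begin{pmatrix}1&\psi_{2^{n-2}}\\0&1\end{pmatrix}\begin{pmatrix}1&0\\0&\sigma_{2^{n-2}}\end{pmatrix}$;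 if $n\equiv3\ (4)$: $E_n=\begin{pmatrix}E_{n-1}&0\\0&E_{n-1}\end{pmatrix}\begin{pmatrix}1&0\\0&\sigma_{2^{n-2}}\end{pmatrix}$. Let $\alpha_n=\alpha_n(x,y)$ over $Q_{2n-1}$. Define $\Psi_1:\mathbb{G}_m\to GL_2$, $t\mapsto\mathrm{diag}(t,-1)$, and for $n\ge2$ the morphism $\Psi_n:Q_{2n-1}\to GL_{2^{n-1}}$ by $\Psi_n=E_n^{-1}\alpha_n^tE_n$ if $n$ is even and $\Psi_n=E_n^t\alpha_nI_nE_n$ if $n$ is odd. *)

(* Defs.v *)
From HB Require Import structures.
From mathcomp Require Import all_boot all_order all_algebra.
Set Implicit Arguments. Unset Strict Implicit. Unset Printing Implicit Defensive.
Import Order.TTheory GRing.Theory Num.Theory.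
Local Open Scope ring_scope.

Lemma exp2S (m : nat) : (2 ^ m + 2 ^ m = 2 ^ m.+1)%N.
Proof. by rewrite expnS mul2n addnn. Qed.

Section Defs.
Variable R : comUnitRingType.

(* tau_N : 1 at (i, i+1) for i even; for N = 2m, the block sum of m copies
   of [[0,1],[0,0]] *)
Definition tau (N : nat) : 'M[R]_N :=
  \matrix_(i < N, j < N) (((~~ odd i) && (j == i.+1 :> nat))%:R : R).
Definition sigma (N : nat) : 'M[R]_N := tau N + (tau N)^T.
Definition psi (N : nat) : 'M[R]_N := tau N - (tau N)^T.

Definition cast2 (m : nat) (A : 'M[R]_(2 ^ m + 2 ^ m)) : 'M[R]_(2 ^ m.+1) :=
  castmx (exp2S m, exp2S m) A.

(* alphaS m a b = Suslin matrix alpha_{m+1}(a, b), a b : nat -> R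
   (a_1 is a 0, a_2 is a 1, ...) *)
Fixpoint alphaS (m : nat) (a b : nat -> R) : 'M[R]_(2 ^ m) :=
  match m with
  | 0 => (a 0%N)%:M
  | m'.+1 =>
      cast2 (block_mx (a 0%N)%:M (alphaS m' (fun i => a i.+1) (fun i => b i.+1))
                      (- (alphaS m' (fun i => b i.+1) (fun i => a i.+1))^T)
                      (b 0%N)%:M)
  end.

(* IS m = I_{m+1} *)
Fixpoint IS (m : nat) : 'M[R]_(2 ^ m) :=
  match m with
  | 0 => 1%:M
  | m'.+1 =>
      if ~~ odd m.+1 then cast2 (block_mx 0 (IS m') (- IS m') 0)
      else cast2 (block_mx (IS m') 0 0 (- IS m'))
  end.

(* ES_step q E_{q+1} = E_{q+2}; here n = q + 2, blocks have size 2^q = 2^(n-2) *)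
Definition ES_step (q : nat) (E : 'M[R]_(2 ^ q)) : 'M[R]_(2 ^ q.+1) :=
  let n := q.+2 in
  let N := (2 ^ q)%N in
  let I : 'M[R]_N := IS q in
  let one : 'M[R]_N := 1%:M in
  if (n <= 2)%N then 1%:M else
  match (n %% 4)%N with
  | 0 => cast2 (block_mx one 0 0 I^T *m block_mx one 0 (tau N) one
                *m block_mx one (- sigma N) 0 one *m block_mx one 0 0 (psi N))
  | 1 => cast2 (block_mx E 0 0 E *m block_mx one 0 0 (psi N))
  | 2 => cast2 (block_mx one 0 0 I^T *m block_mx one 0 (tau N) one
                *m block_mx one (psi N) 0 one *m block_mx one 0 0 (sigma N))
  | _ => cast2 (block_mx E 0 0 E *m block_mx one 0 0 (sigma N))
  end.

(* ES m = E_{m+1} *)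
Fixpoint ES (m : nat) : 'M[R]_(2 ^ m) :=
  match m with
  | 0 => 1%:M
  | q.+1 => ES_step (ES q)
  end.

(* Psi_n on the point (x, y) of Q_{2n-1}, n >= 2 *)
Definition Psi (n : nat) (x y : nat -> R) : 'M[R]_(2 ^ n.-1) :=
  if odd n then (ES n.-1)^T *m alphaS n.-1 x y *m IS n.-1 *m ES n.-1
  else invmx (ES n.-1) *m (alphaS n.-1 x y)^T *m ES n.-1.

Definition Psi1 (t : R) : 'M[R]_2 :=
  \matrix_(i < 2, j < 2) (if i == j then (if i == 0 :> nat then t else -1) else 0).

Definition e1 : nat -> R := fun i => (i == 0%N)%:R.
End Defs.

(* Main.v *)
Require Import Defs.
From HB Require Import structures.
From mathcomp Require Import all_boot all_order all_algebra.
From mathcomp Require Import zify ring.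
Set Implicit Arguments. Unset Strict Implicit. Unset Printing Implicit Defensive.
Import Order.TTheory GRing.Theory Num.Theory.
Local Open Scope ring_scope.

Section Aux.
Variable R : comUnitRingType.
Local Notation tau := (tau R).
Local Notation sigma := (sigma R).
Local Notation psi := (psi R).
Local Notation cast2 := (@cast2 R _).

Lemma castmx_mulE p p' (e : p = p') (A B : 'M[R]_p) :
  castmx (e, e) A *m castmx (e, e) B = castmx (e, e) (A *m B).
Proof. by case: p' / e; rewrite !castmx_id. Qed.
Lemma castmx_trE p p' (e : p = p') (A : 'M[R]_p) :
  (castmx (e, e) A)^T = castmx (e, e) A^T.
Proof. by case: p' / e; rewrite !castmx_id. Qed.
Lemma castmx_addE p p' (e : p = p') (A B : 'M[R]_p) :
  castmx (e, e) A + castmx (e, e) B = castmx (e, e) (A + B).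
Proof. by case: p' / e; rewrite !castmx_id. Qed.
Lemma castmx_oppE p p' (e : p = p') (A : 'M[R]_p) :
  - castmx (e, e) A = castmx (e, e) (- A).
Proof. by case: p' / e; rewrite !castmx_id. Qed.
Lemma castmx_scalarE p p' (e : p = p') (a : R) :
  castmx (e, e) (a%:M : 'M[R]_p) = a%:M.
Proof. by case: p' / e; rewrite !castmx_id. Qed.
Lemma castmx_inj p p' (e : p = p') (A B : 'M[R]_p) :
  castmx (e, e) A = castmx (e, e) B -> A = B.
Proof. by case: p' / e; rewrite !castmx_id. Qed.

Lemma cast2M m (A B : 'M[R]_(2 ^ m + 2 ^ m)) : cast2 A *m cast2 B = cast2 (A *m B).
Proof. exact: castmx_mulE. Qed.
Lemma cast2T m (A : 'M[R]_(2 ^ m + 2 ^ m)) : (cast2 A)^T = cast2 A^T.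
Proof. exact: castmx_trE. Qed.
Lemma cast2D m (A B : 'M[R]_(2 ^ m + 2 ^ m)) : cast2 A + cast2 B = cast2 (A + B).
Proof. exact: castmx_addE. Qed.
Lemma cast2N m (A : 'M[R]_(2 ^ m + 2 ^ m)) : - cast2 A = cast2 (- A).
Proof. exact: castmx_oppE. Qed.
Lemma cast2C m (a : R) : cast2 (a%:M : 'M_(2 ^ m + 2 ^ m)) = a%:M.
Proof. exact: castmx_scalarE. Qed.
Lemma cast2_inj m (A B : 'M[R]_(2 ^ m + 2 ^ m)) : cast2 A = cast2 B -> A = B.
Proof. exact: castmx_inj. Qed.

Lemma tauE N (i j : 'I_N) : tau N i j = ((~~ odd i) && (j == i.+1 :> nat))%:R.
Proof. by rewrite mxE. Qed.

Lemma trN p q (A : 'M[R]_(p, q)) : (- A)^T = - A^T.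
Proof. by apply/matrixP => i j; rewrite !mxE. Qed.

Lemma tau_sq N : tau N *m tau N = 0.
Proof.
apply/matrixP => i j; rewrite !mxE; apply: big1 => k _; rewrite !tauE.
case: (boolP (k == i.+1 :> nat)) => [/eqP ->|_]; last by rewrite andbF mul0r.
by rewrite /= negbK; case: (odd i); rewrite ?mul0r ?mulr0.
Qed.


Lemma sum_delta N c (f : 'I_N.+1 -> R) :
  \sum_(k < N.+1) ((k == c :> nat)%:R * f k) = if (c < N.+1)%N then f (inord c) else 0.
Proof.
case: ltnP => h.
  rewrite (bigD1 (inord c)) //= inordK // eqxx mul1r big1 ?addr0 // => k hk.
  have -> : (k == c :> nat) = false.
    by apply/negbTE; apply: contra hk => /eqP hkc; apply/eqP/val_inj; rewrite /= inordK // hkc.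
  by rewrite mul0r.
apply: big1 => k _; have -> : (k == c :> nat) = false.
  by apply/negbTE; rewrite neq_ltn (leq_trans (ltn_ord k) h).
by rewrite mul0r.
Qed.

Lemma natr_andb (a b : bool) : ((a && b)%:R : R) = a%:R * b%:R.
Proof. by case: a; case: b; rewrite ?mul1r ?mul0r. Qed.

Lemma even_succ_lt N (i : nat) : ~~ odd N -> ~~ odd i -> (i < N)%N -> (i.+1 < N)%N.
Proof.
move=> hN hi hiN; rewrite ltn_neqAle hiN andbT; apply/eqP => e.
by move: hN; rewrite -e /= hi.
Qed.

Lemma tau_tauT N : ~~ odd N ->
  tau N *m (tau N)^T = \matrix_(i, j) ((~~ odd i) && (i == j))%:R.
Proof.
case: N => [|N] hN; apply/matrixP => i j; first by case: i.
rewrite !mxE.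
transitivity (\sum_(k < N.+1) ((k == i.+1 :> nat)%:R *
   (((~~ odd i) && (~~ odd j) && (i.+1 == j.+1)))%:R : R)).
  apply: eq_bigr => k _; rewrite !mxE.
  case: (boolP (k == i.+1 :> nat)) => [/eqP ->|hk]; last by rewrite !andbF !mul0r.
  by rewrite !andbT; case: (~~ odd i); case: (~~ odd j); rewrite ?mul1r ?mul0r ?mulr0 // eq_sym.
rewrite sum_delta; case: (boolP (~~ odd i)) => hi.
  rewrite even_succ_lt //= eqSS; case: (boolP (i == j :> nat)) => [/eqP e|hij].
    by rewrite -e hi (_ : i == j) //; apply/eqP/val_inj.
  have hij' : (i == j) = false by apply/negbTE; exact: hij.
  by rewrite andbF hij'.
by case: ifP.
Qed.


Lemma tauT_tau N :
  (tau N)^T *m tau N = \matrix_(i, j) ((odd i) && (i == j))%:R.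
Proof.
case: N => [|N]; apply/matrixP => i j; first by case: i.
rewrite !mxE.
transitivity (\sum_(k < N.+1) ((k == i.-1 :> nat)%:R *
   (((odd i) && (j == i :> nat)))%:R : R)).
  apply: eq_bigr => k _; rewrite !mxE.
  case: (boolP (i == k.+1 :> nat)) => [/eqP hi|hk].
    rewrite hi /= eqxx mul1r; case: (odd k); rewrite ?mul0r //= mul1r.
    by rewrite -hi.
  rewrite andbF mul0r; case: (boolP (k == i.-1 :> nat)) => [/eqP hk'|]; last by rewrite mul0r.
  case: (nat_of_ord i) hk hk' => [|i'] /= hk hk'; first by rewrite mulr0.
  by rewrite hk' eqxx in hk.
rewrite sum_delta.
have -> : (i.-1 < N.+1)%N by apply: leq_ltn_trans (leq_pred i) (ltn_ord i).
have hij : (j == i :> nat) = (i == j) by rewrite eq_sym.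
by rewrite hij.
Qed.

Lemma tau_id N : ~~ odd N -> tau N *m (tau N)^T + (tau N)^T *m tau N = 1%:M.
Proof.
move=> hN; rewrite tau_tauT // tauT_tau; apply/matrixP => i j; rewrite !mxE.
by case: (odd (nat_of_ord i)); case: (i == j); rewrite ?addr0 ?add0r.
Qed.


Lemma tauT_sq N : (tau N)^T *m (tau N)^T = 0.
Proof. by rewrite -trmx_mul tau_sq trmx0. Qed.

Lemma sigmaT N : (sigma N)^T = sigma N.
Proof. by rewrite /Defs.sigma linearD /= trmxK addrC. Qed.

Lemma psiT N : (psi N)^T = - psi N.
Proof. by rewrite /Defs.psi linearB /= trmxK opprB. Qed.

Lemma sigma_sq N : ~~ odd N -> sigma N *m sigma N = 1%:M.
Proof.
move=> hN; rewrite /Defs.sigma mulmxDl !mulmxDr tau_sq tauT_sq add0r addr0.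
exact: tau_id.
Qed.

Lemma psi_sq N : ~~ odd N -> psi N *m psi N = - 1%:M.
Proof.
move=> hN; rewrite /Defs.psi mulmxBl !mulmxBr tau_sq tauT_sq -(tau_id hN).
by rewrite sub0r subr0 opprD.
Qed.

Lemma sigma_psi N : sigma N *m psi N = - (psi N *m sigma N).
Proof.
rewrite /Defs.sigma /Defs.psi mulmxBr !mulmxDl !mulmxDr !mulNmx tau_sq tauT_sq.
by rewrite !add0r !addr0 oppr0 addr0 opprD opprK addrC.
Qed.

Lemma psi_sigma_psi N : ~~ odd N -> psi N *m sigma N *m psi N = sigma N.
Proof.
move=> hN; rewrite (_ : psi N *m sigma N = - (sigma N *m psi N)); last first.
  by rewrite sigma_psi opprK.
by rewrite mulNmx -mulmxA psi_sq // mulmxN mulmx1 opprK.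
Qed.

Lemma sigma_psi_sigma N : ~~ odd N -> sigma N *m psi N *m sigma N = - psi N.
Proof.
move=> hN; rewrite sigma_psi mulNmx -mulmxA sigma_sq // mulmx1.
by [].
Qed.


Lemma tau_block N : ~~ odd N ->
  tau (N + N) = block_mx (tau N) 0 0 (tau N).
Proof.
move=> hN; apply/matrixP => i j; rewrite block_mxEv !mxE.
case: (splitP i) => i' hi; rewrite !mxE; case: (splitP j) => j' hj; rewrite !mxE hi hj.
- by [].
- case: (boolP (~~ odd i')) => hi'; last by rewrite andFb.
  have := even_succ_lt hN hi' (ltn_ord i').
  have := ltn_ord j'.
  by case: eqP => // e; lia.
- have := ltn_ord j'; case: eqP; rewrite ?andbF //; lia.
- by rewrite oddD (negbTE hN) /= -addnS eqn_add2l.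
Qed.


Lemma sigma_block N : ~~ odd N ->
  sigma (N + N) = block_mx (sigma N) 0 0 (sigma N).
Proof.
by move=> hN; rewrite /Defs.sigma tau_block // tr_block_mx !trmx0 add_block_mx !addr0 ?add0r.
Qed.

Lemma psi_block N : ~~ odd N ->
  psi (N + N) = block_mx (psi N) 0 0 (psi N).
Proof.
move=> hN; rewrite /Defs.psi tau_block // tr_block_mx !trmx0 opp_block_mx.
by rewrite add_block_mx !oppr0 !addr0 ?add0r ?sub0r.
Qed.

Lemma even2 m : ~~ odd (2 ^ m.+1).
Proof. by rewrite expnS oddM. Qed.

Lemma castmx_sub p p' (e : p = p') (F : forall k, 'M[R]_k) : F p' = castmx (e, e) (F p).
Proof. by case: p' / e; rewrite castmx_id. Qed.

Lemma tau_cast m : tau (2 ^ m.+2) = cast2 (block_mx (tau (2 ^ m.+1)) 0 0 (tau (2 ^ m.+1))).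
Proof. by rewrite (castmx_sub (exp2S m.+1) tau) tau_block // even2. Qed.
Lemma sigma_cast m : sigma (2 ^ m.+2) = cast2 (block_mx (sigma (2 ^ m.+1)) 0 0 (sigma (2 ^ m.+1))).
Proof. by rewrite (castmx_sub (exp2S m.+1) sigma) sigma_block // even2. Qed.
Lemma psi_cast m : psi (2 ^ m.+2) = cast2 (block_mx (psi (2 ^ m.+1)) 0 0 (psi (2 ^ m.+1))).
Proof. by rewrite (castmx_sub (exp2S m.+1) psi) psi_block // even2. Qed.


Local Notation IS := (@IS R).

Lemma IS_S m : IS m.+1 = if odd m then cast2 (block_mx (IS m) 0 0 (- IS m))
                         else cast2 (block_mx 0 (IS m) (- IS m) 0).
Proof. by rewrite /=; case: (odd m). Qed.

Definition antis (m : nat) : bool := (m %% 4 == 1)%N || (m %% 4 == 2)%N.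

Lemma antisS m : antis m.+1 = (odd m == antis m).
Proof.
rewrite /antis; have -> : odd m = (m %% 2 == 1)%N by rewrite modn2; case: odd.
have : (m %% 4 = 0 \/ m %% 4 = 1 \/ m %% 4 = 2 \/ m %% 4 = 3)%N by lia.
case=> [h|[h|[h|h]]].
- have h1 : (m.+1 %% 4 = 1)%N by lia. have h3 : (m %% 2 = 0)%N by lia.
  by rewrite h h1 h3.
- have h1 : (m.+1 %% 4 = 2)%N by lia. have h3 : (m %% 2 = 1)%N by lia.
  by rewrite h h1 h3.
- have h1 : (m.+1 %% 4 = 3)%N by lia. have h3 : (m %% 2 = 0)%N by lia.
  by rewrite h h1 h3.
- have h1 : (m.+1 %% 4 = 0)%N by lia. have h3 : (m %% 2 = 1)%N by lia.
  by rewrite h h1 h3.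
Qed.

Lemma IS_tr m : (IS m)^T = if antis m then - IS m else IS m.
Proof.
elim: m => [|m IH]; first by rewrite /= tr_scalar_mx.
rewrite IS_S antisS; case: (odd m); case: (antis m) IH => IH;
  rewrite /= cast2T tr_block_mx !trmx0 ?linearN /= IH ?opprK ?cast2N ?opp_block_mx ?oppr0 ?opprK //.
Qed.


Lemma IS_orth m : IS m *m (IS m)^T = 1%:M.
Proof.
elim: m => [|m IH]; first by rewrite /= tr_scalar_mx mul1mx.
rewrite IS_S; case: (odd m); rewrite cast2T cast2M tr_block_mx !trmx0 mulmx_block;
  rewrite ?linearN /= ?mulmx0 ?mul0mx ?mulmxN ?mulNmx ?opprK ?IH ?addr0 ?add0r ?oppr0;
  by rewrite -scalar_mx_block cast2C.
Qed.

Lemma IS_orth' m : (IS m)^T *m IS m = 1%:M.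
Proof. by apply: mulmx1C; exact: IS_orth. Qed.


Local Notation alpha := (@alphaS R).
Definition dot (m : nat) (a b : nat -> R) := \sum_(i < m.+1) a i * b i.

Lemma dotS m a b : dot m.+1 a b = a 0%N * b 0%N + dot m (fun i => a i.+1) (fun i => b i.+1).
Proof. by rewrite /dot big_ord_recl. Qed.

Lemma dotC m a b : dot m a b = dot m b a.
Proof. by apply: eq_bigr => i _; rewrite mulrC. Qed.

Lemma alpha_S m a b : alpha m.+1 a b =
  cast2 (block_mx (a 0%N)%:M (alpha m (fun i => a i.+1) (fun i => b i.+1))
         (- (alpha m (fun i => b i.+1) (fun i => a i.+1))^T) (b 0%N)%:M).
Proof. by []. Qed.

Lemma alpha_inv m : forall a b,
  alpha m a b *m (alpha m b a)^T = (dot m a b)%:M /\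
  (alpha m b a)^T *m alpha m a b = (dot m a b)%:M.
Proof.
elim: m => [|m IH] a b.
  rewrite /= tr_scalar_mx /dot big_ord1 -!scalar_mxM.
  by split => //; rewrite mulrC.
rewrite !alpha_S cast2T cast2M cast2M tr_block_mx !mulmx_block.
set A := alpha m _ _; set B := alpha m _ _.
have [h1 h2] := IH (fun i => a i.+1) (fun i => b i.+1).
rewrite -/A -/B in h1 h2.
rewrite !tr_scalar_mx linearN /= trmxK.
rewrite !mul_scalar_mx !mul_mx_scalar !mulmxN !mulNmx !opprK h1 h2 !scalerN.
rewrite !addNr !addrN !scale_scalar_mx -!raddfD /= dotS.
rewrite (mulrC (b 0%N)) (addrC (dot m _ _)).
by split; rewrite -scalar_mx_block cast2C.
Qed.


Lemma IS_sign_cancel m (X Y : 'M[R]_(2 ^ m)) :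
  X *m (IS m)^T = (IS m)^T *m Y -> X *m IS m = IS m *m Y.
Proof.
by rewrite IS_tr; case: (antis m) => //; rewrite mulmxN mulNmx => /oppr_inj.
Qed.

Lemma IS_swap m (X Y : 'M[R]_(2 ^ m)) :
  X *m IS m = IS m *m Y -> IS m *m X = Y *m IS m.
Proof.
move=> h; symmetry; apply: IS_sign_cancel.
have : (IS m)^T *m (X *m IS m) *m (IS m)^T = (IS m)^T *m (IS m *m Y) *m (IS m)^T.
  by rewrite h.
by rewrite -!mulmxA IS_orth mulmx1 !mulmxA IS_orth' mul1mx => ->.
Qed.

Lemma IS_tswap m (X Y : 'M[R]_(2 ^ m)) :
  X *m IS m = IS m *m Y -> Y^T *m IS m = IS m *m X^T.
Proof.
move=> h; apply: IS_sign_cancel.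
by rewrite -!trmx_mul h.
Qed.

Lemma alpha_IS m : forall a b,
  (~~ odd m -> alpha m a b *m IS m = IS m *m (alpha m a b)^T) /\
  (odd m -> alpha m a b *m IS m = IS m *m alpha m b a).
Proof.
elim: m => [|m IH] a b.
  by split => // _; rewrite /= tr_scalar_mx mulmx1 mul1mx.
have [h1 h2] := IH (fun i => a i.+1) (fun i => b i.+1).
have [h3 h4] := IH (fun i => b i.+1) (fun i => a i.+1).
rewrite oddS negbK; case: (boolP (odd m)) => ho; split => // _.
  rewrite !alpha_S IS_S ho cast2T cast2M cast2M tr_block_mx !mulmx_block.
  set A := alpha m _ _; set B := alpha m _ _.
  rewrite -/A -/B in h1 h2 h3 h4.
  rewrite trN trmxK !tr_scalar_mx.
  rewrite !mulmx0 !mul0mx !mulmxN !mulNmx !addr0 !add0r !mul_scalar_mx !mul_mx_scalar.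
  by rewrite (h2 ho) (IS_tswap (h2 ho)).
rewrite !alpha_S IS_S (negbTE ho) !cast2M !mulmx_block.
set A := alpha m _ _; set B := alpha m _ _.
rewrite -/A -/B in h1 h2 h3 h4.
rewrite !mulmx0 !mul0mx !mulmxN !mulNmx !addr0 !add0r !mul_scalar_mx !mul_mx_scalar.
by rewrite (h1 ho) (IS_swap (h3 ho)).
Qed.


Local Notation ES := (@ES R).

Lemma ES_S m : ES m.+1 = ES_step (ES m).
Proof. by []. Qed.

Lemma ES_S0 m : (0 < m)%N -> (m %% 4 = 2)%N -> ES m.+1 =
  cast2 (block_mx 1%:M 0 0 (IS m)^T *m block_mx 1%:M 0 (tau (2 ^ m)) 1%:M
      *m block_mx 1%:M (- sigma (2 ^ m)) 0 1%:M *m block_mx 1%:M 0 0 (psi (2 ^ m))).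
Proof.
move=> h0 h; rewrite ES_S /ES_step.
have -> : (m.+2 <= 2)%N = false by lia.
have -> : (m.+2 %% 4 = 0)%N by lia.
by [].
Qed.


Lemma ES_S1 m : (0 < m)%N -> (m %% 4 = 3)%N -> ES m.+1 =
  cast2 (block_mx (ES m) 0 0 (ES m) *m block_mx 1%:M 0 0 (psi (2 ^ m))).
Proof.
move=> h0 h; rewrite ES_S /ES_step.
have -> : (m.+2 <= 2)%N = false by lia.
have -> : (m.+2 %% 4 = 1)%N by lia.
by [].
Qed.

Lemma ES_S2 m : (0 < m)%N -> (m %% 4 = 0)%N -> ES m.+1 =
  cast2 (block_mx 1%:M 0 0 (IS m)^T *m block_mx 1%:M 0 (tau (2 ^ m)) 1%:M
      *m block_mx 1%:M (psi (2 ^ m)) 0 1%:M *m block_mx 1%:M 0 0 (sigma (2 ^ m))).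
Proof.
move=> h0 h; rewrite ES_S /ES_step.
have -> : (m.+2 <= 2)%N = false by lia.
have -> : (m.+2 %% 4 = 2)%N by lia.
by [].
Qed.

Lemma ES_S3 m : (0 < m)%N -> (m %% 4 = 1)%N -> ES m.+1 =
  cast2 (block_mx (ES m) 0 0 (ES m) *m block_mx 1%:M 0 0 (sigma (2 ^ m))).
Proof.
move=> h0 h; rewrite ES_S /ES_step.
have -> : (m.+2 <= 2)%N = false by lia.
have -> : (m.+2 %% 4 = 3)%N by lia.
by [].
Qed.

Lemma ES1 : ES 1 = 1%:M.
Proof. by []. Qed.

Lemma IS1 : IS 1 = psi (2 ^ 1).
Proof.
rewrite (castmx_sub (exp2S 0) psi) /= /Defs.cast2; congr castmx.
apply/matrixP => i j; rewrite block_mxEv !mxE.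
case: (splitP i) => i' hi; rewrite !mxE; case: (splitP j) => j' hj; rewrite !mxE hi hj;
  by rewrite ?ord1 //= ?subr0 ?sub0r ?oppr0.
Qed.

Lemma IS_sq m : IS m *m IS m = if antis m then - 1%:M else 1%:M.
Proof.
have := IS_orth m; rewrite IS_tr; case: (antis m) => //.
by rewrite mulmxN => h; rewrite -h opprK.
Qed.

Lemma conjM p (P Q J : 'M[R]_p) :
  (P *m Q)^T *m J *m (P *m Q) = Q^T *m (P^T *m J *m P) *m Q.
Proof. by rewrite trmx_mul !mulmxA. Qed.

Lemma cast2_conj m (X J : 'M[R]_(2 ^ m + 2 ^ m)) :
  (cast2 X)^T *m cast2 J *m cast2 X = cast2 (X^T *m J *m X).
Proof. by rewrite cast2T !cast2M. Qed.


Definition symc (m : nat) : bool := (m %% 4 == 0)%N || (m %% 4 == 3)%N.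

Ltac bsimp := rewrite ?tr_block_mx ?trmx0 ?trmx1 ?trN ?trmxK ?tr_scalar_mx;
  rewrite ?mulmx_block;
  do 3 rewrite ?mulmx0 ?mul0mx ?mulmx1 ?mul1mx ?addr0 ?add0r
          ?mulmxN ?mulNmx ?opprK ?oppr0.

Lemma ES_form m : (ES m.+1)^T *m IS m.+1 *m ES m.+1 =
  if symc m.+1 then sigma (2 ^ m.+1) else psi (2 ^ m.+1).
Proof.
elim: m => [|m IH].
  by rewrite ES1 IS1 trmx1 mul1mx mulmx1.
have hN := even2 m.
have : (m.+1 %% 4 = 0 \/ m.+1 %% 4 = 1 \/ m.+1 %% 4 = 2 \/ m.+1 %% 4 = 3)%N by lia.
case=> [h|[h|[h|h]]].
-
  have ho : odd m.+1 = false.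
    by have := modn2 m.+1; case: (odd m.+1) => //= H; lia.
  have hs : symc m.+2 = false by rewrite /symc; apply/negbTE; apply/norP; split; apply/eqP; lia.
  have ha : antis m.+1 = false by rewrite /antis h.
  rewrite hs ES_S2 // (IS_S m.+1) ho cast2_conj !conjM psi_cast; congr cast2.
  have IT := IS_tr m.+1; rewrite ha in IT.
  have IQ := IS_sq m.+1; rewrite ha in IQ.
  set N := (2 ^ m.+1)%N; set I := IS m.+1.
  have K1 : (block_mx 1%:M 0 0 I^T)^T *m block_mx 0 I (- I) 0 *m block_mx 1%:M 0 0 I^T
            = block_mx 0 1%:M (- 1%:M) 0 :> 'M_(N + N).
    by bsimp; rewrite IT IQ.
  have K2 : (block_mx 1%:M 0 (tau N) 1%:M)^T *m block_mx 0 1%:M (- 1%:M) 0 *m block_mx 1%:M 0 (tau N) 1%:M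
            = block_mx (psi N) 1%:M (- 1%:M) 0 :> 'M_(N + N).
    by bsimp; rewrite /Defs.psi addrC.
  have K3 : (block_mx 1%:M (psi N) 0 1%:M)^T *m block_mx (psi N) 1%:M (- 1%:M) 0 *m
            block_mx 1%:M (psi N) 0 1%:M = block_mx (psi N) 0 0 (- psi N) :> 'M_(N + N).
    by bsimp; rewrite psiT mulNmx psi_sq // opprK addNr subrr mul0mx add0r.
  have K4 : (block_mx 1%:M 0 0 (sigma N))^T *m block_mx (psi N) 0 0 (- psi N) *m
            block_mx 1%:M 0 0 (sigma N) = block_mx (psi N) 0 0 (psi N) :> 'M_(N + N).
    by bsimp; rewrite sigmaT sigma_psi_sigma // opprK.
  by rewrite K1 K2 K3 K4.
-
  have ho : odd m.+1 by have := modn2 m.+1; case: (odd m.+1) => //= H; lia.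
  have hs : symc m.+2 = false by rewrite /symc; apply/negbTE; apply/norP; split; apply/eqP; lia.
  have hs' : symc m.+1 = false by rewrite /symc; apply/negbTE; apply/norP; split; apply/eqP; lia.
  rewrite hs' in IH.
  rewrite hs ES_S3 // (IS_S m.+1) ho cast2_conj !conjM psi_cast; congr cast2.
  by bsimp; rewrite IH sigmaT sigma_psi_sigma // opprK.
-
  have ho : odd m.+1 = false.
    by have := modn2 m.+1; case: (odd m.+1) => //= H; lia.
  have hs : symc m.+2 by rewrite /symc; apply/orP; right; apply/eqP; lia.
  have ha : antis m.+1 by rewrite /antis h.
  rewrite hs ES_S0 // (IS_S m.+1) ho cast2_conj !conjM sigma_cast; congr cast2.
  have IT := IS_tr m.+1; rewrite ha in IT.
  have IQ := IS_sq m.+1; rewrite ha in IQ.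
  set N := (2 ^ m.+1)%N; set I := IS m.+1.
  have K1 : (block_mx 1%:M 0 0 I^T)^T *m block_mx 0 I (- I) 0 *m block_mx 1%:M 0 0 I^T
            = block_mx 0 1%:M 1%:M 0 :> 'M_(N + N).
    by bsimp; rewrite IT mulmxN IQ opprK.
  have K2 : (block_mx 1%:M 0 (tau N) 1%:M)^T *m block_mx 0 1%:M 1%:M 0 *m block_mx 1%:M 0 (tau N) 1%:M
            = block_mx (sigma N) 1%:M 1%:M 0 :> 'M_(N + N).
    by bsimp; rewrite /Defs.sigma addrC.
  have K3 : (block_mx 1%:M (- sigma N) 0 1%:M)^T *m block_mx (sigma N) 1%:M 1%:M 0 *m
            block_mx 1%:M (- sigma N) 0 1%:M = block_mx (sigma N) 0 0 (- sigma N) :> 'M_(N + N).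
    by bsimp; rewrite sigmaT sigma_sq // addNr mul0mx oppr0 sub0r.
  have K4 : (block_mx 1%:M 0 0 (psi N))^T *m block_mx (sigma N) 0 0 (- sigma N) *m
            block_mx 1%:M 0 0 (psi N) = block_mx (sigma N) 0 0 (sigma N) :> 'M_(N + N).
    by bsimp; rewrite psiT !mulNmx opprK psi_sigma_psi.
  by rewrite K1 K2 K3 K4.
-
  have ho : odd m.+1 by have := modn2 m.+1; case: (odd m.+1) => //= H; lia.
  have hs : symc m.+2 by rewrite /symc; apply/orP; left; apply/eqP; lia.
  have hs' : symc m.+1 by rewrite /symc; apply/orP; right; apply/eqP; lia.
  rewrite hs' in IH.
  rewrite hs ES_S1 // (IS_S m.+1) ho cast2_conj !conjM sigma_cast; congr cast2.
  by bsimp; rewrite IH psiT !mulNmx opprK psi_sigma_psi.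
Qed.


Lemma castmx0 p p' (e : p = p') : castmx (e, e) (0 : 'M[R]_p) = 0.
Proof. by case: p' / e; rewrite castmx_id. Qed.

Lemma alpha_zero m : forall a b, (forall i, a i = 0) -> (forall i, b i = 0) ->
  alpha m a b = 0.
Proof.
elim: m => [|m IH] a b ha hb; first by rewrite /= ha raddf0.
rewrite alpha_S !IH // ha hb trmx0 oppr0 -scalar_mx_block.
by rewrite cast2C raddf0.
Qed.

Lemma alpha_e1 m : alpha m (e1 R) (e1 R) = 1%:M.
Proof.
case: m => [|m]; first by [].
rewrite alpha_S alpha_zero // trmx0 oppr0 -scalar_mx_block.
by rewrite /e1 /= cast2C.
Qed.

Lemma sigma_unit N : ~~ odd N -> sigma N \in unitmx.
Proof. by move=> hN; case: (mulmx1_unit (sigma_sq hN)). Qed.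

Lemma psi_unit N : ~~ odd N -> psi N \in unitmx.
Proof.
move=> hN; have h : psi N *m (- psi N) = 1%:M by rewrite mulmxN psi_sq // opprK.
by case: (mulmx1_unit h).
Qed.

Lemma IS_unit m : IS m \in unitmx.
Proof. by case: (mulmx1_unit (IS_orth m)). Qed.

Lemma ES_unit m : ES m.+1 \in unitmx.
Proof.
have h : (ES m.+1)^T *m IS m.+1 *m ES m.+1 \in unitmx.
  rewrite ES_form; case: (symc m.+1); [exact: (sigma_unit (even2 m)) | exact: (psi_unit (even2 m))].
by move: h; rewrite !unitmx_mul => /andP [_ ->].
Qed.

Lemma even_conj p (E J I A B : 'M[R]_p) : E \in unitmx ->
  A *m I = I *m B -> B *m A^T = 1%:M -> J = E^T *m I *m E ->
  (invmx E *m A^T *m E)^T *m J *m (invmx E *m A^T *m E) = J.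
Proof.
move=> hE hAI hB hJ.
have h1 : forall X : 'M[R]_p, X *m (invmx E)^T *m E^T = X.
  by move=> X; rewrite -mulmxA -trmx_mul mulmxV // trmx1 mulmx1.
have h2 : forall X : 'M[R]_p, X *m E *m invmx E = X.
  by move=> X; rewrite -mulmxA mulmxV // mulmx1.
rewrite {1}hJ !trmx_mul trmxK !mulmxA h1 h2.
rewrite -(mulmxA _ A I) hAI mulmxA -(mulmxA _ B) hB mulmx1.
by rewrite hJ.
Qed.

Lemma PsiE m x y : Psi m.+2 x y = if odd m
  then (ES m.+1)^T *m alpha m.+1 x y *m IS m.+1 *m ES m.+1
  else invmx (ES m.+1) *m (alpha m.+1 x y)^T *m ES m.+1.
Proof. by rewrite /Psi [odd m.+2]/= negbK. Qed.

Lemma Psi1_diag (t : R) : Psi1 t = diag_mx (\row_(i < 2) (if i == 0 :> nat then t else -1)).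
Proof. by apply/matrixP => i j; rewrite !mxE; case: eqP => [->|]; rewrite ?eqxx ?mulr1n ?mulr0n. Qed.

End Aux.

Unset Implicit Arguments.

Theorem proposition3p6 (k : fieldType) (hk : (2%:R : k) != 0) (R : comUnitAlgType k) :
  (forall t : R, t \is a GRing.unit ->
     (Psi1 t)^T = Psi1 t /\ Psi1 t \in unitmx) /\
  (forall n : nat, (2 <= n)%N ->
     (forall x y : nat -> R, \sum_(i < n) x i * y i = 1 ->
        Psi n x y \in unitmx /\
        ((n %% 4 = 0)%N -> (Psi n x y)^T *m sigma R (2 ^ n.-1) *m Psi n x y
                            = sigma R (2 ^ n.-1)) /\
        ((n %% 4 = 1)%N -> (Psi n x y)^T = Psi n x y) /\
        ((n %% 4 = 2)%N -> (Psi n x y)^T *m psi R (2 ^ n.-1) *m Psi n x y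
                            = psi R (2 ^ n.-1)) /\
        ((n %% 4 = 3)%N -> (Psi n x y)^T = - Psi n x y)) /\
     ((n %% 4 = 0)%N -> Psi n (e1 R) (e1 R) = 1%:M) /\
     ((n %% 4 = 1)%N -> Psi n (e1 R) (e1 R) = sigma R (2 ^ n.-1)) /\
     ((n %% 4 = 2)%N -> Psi n (e1 R) (e1 R) = 1%:M) /\
     ((n %% 4 = 3)%N -> Psi n (e1 R) (e1 R) = psi R (2 ^ n.-1))).
Proof.
split.
  move=> t ht; split.
    by rewrite Psi1_diag tr_diag_mx.
  rewrite Psi1_diag unitmxE det_diag !big_ord_recr big_ord0 !mxE /= mul1r.
  by rewrite unitrM ht unitrN unitr1.
move=> [|[|m]] // _.
change (m.+2.-1) with m.+1.
have EU := ES_unit R m.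
have EF := ES_form R m.
have hm2 := modn2 m.
case: (boolP (odd m)) => ho.
- rewrite ho in hm2.
  have hs1 : (m.+2 %% 4 = 1)%N -> symc m.+1 /\ antis m.+1 = false.
    move=> h; rewrite /symc /antis; split; first by apply/orP; left; apply/eqP; lia.
    by apply/negbTE/norP; split; apply/eqP; lia.
  have hs3 : (m.+2 %% 4 = 3)%N -> symc m.+1 = false /\ antis m.+1.
    move=> h; rewrite /symc /antis; split; last by apply/orP; right; apply/eqP; lia.
    by apply/negbTE/norP; split; apply/eqP; lia.
  split.
    move=> x y H; rewrite PsiE ho.
    have Hd : dot m.+1 x y = 1 := H.
    have hA : alphaS m.+1 x y *m (alphaS m.+1 y x)^T = 1%:M.
      by have [h _] := alpha_inv m.+1 x y; rewrite h Hd.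
    have AU := (mulmx1_unit hA).1.
    have [hAI _] := alpha_IS m.+1 x y.
    have {}hAI : _ := hAI ltac:(by rewrite /= negbK).
    have hT : ((ES R m.+1)^T *m alphaS m.+1 x y *m IS R m.+1 *m ES R m.+1)^T =
              (ES R m.+1)^T *m (IS R m.+1)^T *m (alphaS m.+1 x y)^T *m ES R m.+1.
      by rewrite !trmx_mul trmxK !mulmxA.
    split.
      by rewrite !unitmx_mul unitmx_tr EU AU IS_unit.
    split; first by move=> h; lia.
    split.
      move=> /hs1 [_ ha]; rewrite hT IS_tr ha -(mulmxA (ES R m.+1)^T (IS R m.+1)) -hAI.
      by rewrite !mulmxA.
    split; first by move=> h; lia.
    move=> /hs3 [_ ha]; rewrite hT IS_tr ha mulmxN !mulNmx -(mulmxA (ES R m.+1)^T (IS R m.+1)) -hAI.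
    by rewrite !mulmxA.
  split; first by move=> h; lia.
  split.
    by move=> /hs1 [hs _]; rewrite PsiE ho alpha_e1 mulmx1 EF hs.
  split; first by move=> h; lia.
  by move=> /hs3 [hs _]; rewrite PsiE ho alpha_e1 mulmx1 EF hs.
- rewrite (negbTE ho) in hm2.
  have hs0 : (m.+2 %% 4 = 0)%N -> symc m.+1.
    by move=> h; rewrite /symc; apply/orP; right; apply/eqP; lia.
  have hs2 : (m.+2 %% 4 = 2)%N -> symc m.+1 = false.
    by move=> h; rewrite /symc; apply/negbTE/norP; split; apply/eqP; lia.
  have hbase : Psi m.+2 (e1 R) (e1 R) = 1%:M.
    by rewrite PsiE (negbTE ho) alpha_e1 trmx1 mulmx1 mulVmx.
  split.
    move=> x y H; rewrite PsiE (negbTE ho).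
    have Hd : dot m.+1 y x = 1 by rewrite dotC; exact: H.
    have hB : alphaS m.+1 y x *m (alphaS m.+1 x y)^T = 1%:M.
      by have [h _] := alpha_inv m.+1 y x; rewrite h Hd.
    have AU : alphaS m.+1 x y \in unitmx.
      by have := (mulmx1_unit hB).2; rewrite unitmx_tr.
    have [_ hAI] := alpha_IS m.+1 x y.
    have {}hAI := hAI ho.
    split.
      by rewrite !unitmx_mul unitmx_inv unitmx_tr EU AU.
    split.
      move=> /hs0 hs; apply: (even_conj EU hAI hB).
      by rewrite EF hs.
    split; first by move=> h; lia.
    split.
      move=> /hs2 hs; apply: (even_conj EU hAI hB).
      by rewrite EF hs.
    by move=> h; lia.
  split; first by [].
  split; first by move=> h; lia.
  split; first by [].
  by move=> h; lia.
Qed.
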